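(* For every $\varepsilon>0$ and $n\in\mathbb{N}$ there exists $N\in\mathbb{N}$ such that every $N$-partitioned hypergraph $H$ with density $d$ has an $n$-partitioned subhypergraph $H_0$ with density at least $d-\varepsilon$ and with the following property: denoting by $I$ the index set of $H_0$, there exist vertices $\gamma_{ik}\in V_{ik}$, $i<k$, $i,k\in I$, such that for every $j\in I$ with $i<j<k$, the degree in the $(i,j,k)$-triad of $H_0$ of each top vertex of that triad is at most the degree of $\gamma_{ik}$ in that triad.
   Context: An $n$-partitioned hypergraph $H$ is a finite $3$-uniform hypergraph whose vertex set is partitioned into nonempty sets $V_{ij}$, $1\le i<j\le n$, such that every edge has, for some $1\le i<j<k\le n$, exactly one vertex in each of $V_{ij}$, $V_{ik}$, $V_{jk}$; the set of such edges is the $(i,j,k)$-triad, and vertices of $V_{ik}$ are its top vertices. The density of a triad is its number of edges divided by $|V_{ij}||V_{ik}||V_{jk}|$, and the density of $H$ is the minimum density of a triad. The degree of $v\in V_{ik}$ in the $(i,j,k)$-triad is the number of edges of the triad containing $v$ divided by $|V_{ij}||V_{jk}|$. For $I\subseteq[n]$, the induced subhypergraph with index set $I$ has parts $V_{ij}$, $i<j$, $i,j\in I$ (indexed by elements of $I$) and all edges of $H$ inside these parts; a subhypergraph is obtained from an induced subhypergraph by deleting some edges, and has the same index set. *)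

(* Defs.v *)
From mathcomp Require Import all_boot all_order all_algebra.
From mathcomp Require Import reals.
Set Implicit Arguments. Unset Strict Implicit. Unset Printing Implicit Defensive.
Import Order.TTheory GRing.Theory Num.Theory.
Local Open Scope ring_scope.

(* An N-partitioned hypergraph is given by a finite vertex type V, a labelling
   [part : V -> 'I_N * 'I_N] (v lies in V_{ij} iff part v = (i,j); indices are
   0-based), and an edge set E.  An edge {x,y,z} of the (i,j,k)-triad with
   x in V_ij, y in V_ik (the top vertex), z in V_jk is stored as the ordered
   triple ((x, y), z); this is a bijective encoding of such 3-sets. *)

Definition Vpart (N : nat) (V : finType) (part : V -> 'I_N * 'I_N)
  (i j : 'I_N) : {set V} := [set v | part v == (i, j)].

Definition in_triad (N : nat) (V : finType) (part : V -> 'I_N * 'I_N)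
  (i j k : 'I_N) (e : V * V * V) : bool :=
  [&& part e.1.1 == (i, j), part e.1.2 == (i, k) & part e.2 == (j, k)].

Definition partitioned_hg (N : nat) (V : finType) (part : V -> 'I_N * 'I_N)
  (E : {set V * V * V}) : Prop :=
  [/\ (forall v : V, ((part v).1 < (part v).2)%N),
      (forall i j : 'I_N, (i < j)%N -> exists v : V, part v = (i, j)) &
      (forall e, e \in E -> exists i j k : 'I_N,
          [/\ (i < j)%N, (j < k)%N & in_triad part i j k e])].

Section Dens.
Variables (R : realType) (N : nat) (V : finType) (part : V -> 'I_N * 'I_N).

Definition triad_density (E : {set V * V * V}) (i j k : 'I_N) : R :=
  (#|[set e in E | in_triad part i j k e]|%:R) /
  ((#|Vpart part i j| * #|Vpart part i k| * #|Vpart part j k|)%N%:R).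

Definition triad_degree (E : {set V * V * V}) (i j k : 'I_N) (v : V) : R :=
  (#|[set e in E | in_triad part i j k e && (e.1.2 == v)]|%:R) /
  ((#|Vpart part i j| * #|Vpart part j k|)%N%:R).

Definition hg_density (I : {set 'I_N}) (E : {set V * V * V}) : R :=
  \big[Order.min/1]_(i in I)
    \big[Order.min/1]_(j in I | (i < j)%N)
      \big[Order.min/1]_(k in I | (j < k)%N) triad_density E i j k.

End Dens.

(* Main.v *)
Require Import Defs.
From mathcomp Require Import all_boot all_order all_algebra.
From mathcomp Require Import reals.
From mathcomp Require Import zify lra.
Import Order.TTheory GRing.Theory Num.Theory.
Set Implicit Arguments. Unset Strict Implicit. Unset Printing Implicit Defensive.


Lemma take_set (T : finType) (X : {set T}) n : (n <= #|X|)%N ->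
  exists2 A : {set T}, A \subset X & #|A| = n.
Proof.
move=> hn; exists [set x in take n (enum X)].
  by apply/subsetP=> x; rewrite inE => /mem_take; rewrite mem_enum.
rewrite cardsE (card_uniqP _); last by apply: take_uniq; exact: enum_uniq.
by rewrite size_take -cardE; case: ltnP => //; lia.
Qed.

Lemma ramsey (u : nat) : forall a b : nat, exists L : nat,
  forall (T : finType) (P : {set T} -> bool) (M : {set T}), (L <= #|M|)%N ->
  exists2 X : {set T}, X \subset M &
    ((a <= #|X|)%N /\ (forall B : {set T}, B \subset X -> #|B| = u -> P B)) \/
    ((b <= #|X|)%N /\ (forall B : {set T}, B \subset X -> #|B| = u -> ~~ P B)).
Proof.
elim: u => [|u IHu] a b.
  exists (maxn a b) => T P M hM; exists M => //.
  have h0 : forall B : {set T}, #|B| = 0%N -> B = set0 by move=> B /eqP; rewrite cards_eq0 => /eqP.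
  case hP: (P set0); [left|right]; (split; [lia|]) => B _ /h0 ->; by rewrite hP.
elim: a b => [|a IHa] b.
  exists 0%N => T P M _; exists set0; first exact: sub0set.
  left; split => // B; rewrite subset0 => /eqP -> ; by rewrite cards0.
elim: b => [|b IHb].
  exists 0%N => T P M _; exists set0; first exact: sub0set.
  right; split => // B; rewrite subset0 => /eqP -> ; by rewrite cards0.
have [L1 H1] := IHa b.+1.
have [L2 H2] := IHb.
have [L3 H3] := IHu (maxn L1 L2) (maxn L1 L2).
exists L3.+1 => T P M hM.
have : (0 < #|M|)%N by lia.
rewrite card_gt0 => /set0Pn [x xM].
have hM' : (L3 <= #|M :\ x|)%N by rewrite (cardsD1 x M) xM in hM; lia.
have [Y YM [[hY HY]|[hY HY]]] := H3 T (fun B => P (x |: B)) _ hM'.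
- have [X XY [[hX HX]|[hX HX]]] := H1 T P Y ltac:(lia).
  + exists (x |: X).
      apply/subsetP=> y; rewrite in_setU1 => /orP [/eqP -> //|yX].
      by have := subsetP YM y (subsetP XY y yX); rewrite in_setD1 => /andP [].
    have xX : x \notin X.
      apply/negP => xX; have := subsetP YM x (subsetP XY x xX).
      by rewrite in_setD1 eqxx.
    left; split; first by rewrite cardsU1 xX; lia.
    move=> B BX hB.
    case xB: (x \in B).
    * have -> : B = x |: (B :\ x) by rewrite setD1K.
      apply: HY.
        apply/subsetP => y; rewrite in_setD1 => /andP [yx yB].
        have := subsetP BX y yB; rewrite in_setU1 (negbTE yx) /= => yX.
        exact: subsetP XY y yX.
      by move: hB; rewrite (cardsD1 x B) xB; lia.
    * apply: HX => //; apply/subsetP => y yB.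
      have := subsetP BX y yB; rewrite in_setU1 => /orP [/eqP yx|//].
      by move: xB; rewrite -yx yB.
  + exists X => //; last by right.
    exact: subset_trans XY (subset_trans YM (subD1set M x)).
- have [X XY [[hX HX]|[hX HX]]] := H2 T P Y ltac:(lia).
  + exists X => //; last by left.
    exact: subset_trans XY (subset_trans YM (subD1set M x)).
  + exists (x |: X).
      apply/subsetP=> y; rewrite in_setU1 => /orP [/eqP -> //|yX].
      by have := subsetP YM y (subsetP XY y yX); rewrite in_setD1 => /andP [].
    have xX : x \notin X.
      apply/negP => xX; have := subsetP YM x (subsetP XY x xX).
      by rewrite in_setD1 eqxx.
    right; split; first by rewrite cardsU1 xX; lia.
    move=> B BX hB.
    case xB: (x \in B).
    * have -> : B = x |: (B :\ x) by rewrite setD1K.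
      apply: HY.
        apply/subsetP => y; rewrite in_setD1 => /andP [yx yB].
        have := subsetP BX y yB; rewrite in_setU1 (negbTE yx) /= => yX.
        exact: subsetP XY y yX.
      by move: hB; rewrite (cardsD1 x B) xB; lia.
    * apply: HX => //; apply/subsetP => y yB.
      have := subsetP BX y yB; rewrite in_setU1 => /orP [/eqP yx|//].
      by move: xB; rewrite -yx yB.
Qed.


Lemma iter_ramsey (n : nat) (Lbad : nat -> nat) (t : nat) : exists L : nat,
  forall (T : finType) (nb : {set T} -> bool),
  (forall u, (2 <= u)%N -> forall X : {set T}, (Lbad u <= #|X|)%N ->
      exists2 B : {set T}, B \subset X & #|B| = u /\ nb B) ->
  forall M : {set T}, (L <= #|M|)%N ->
  exists2 X : {set T}, X \subset M & (n <= #|X|)%N /\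
     (forall B : {set T}, B \subset X -> (2 <= #|B| < 2 + t)%N -> nb B).
Proof.
elim: t => [|t [Lt Ht]].
  exists n => T nb _ M hM; exists M => //; split => // B _; lia.
have [L' HL] := ramsey (2 + t) Lt (Lbad (2 + t)).
exists L' => T nb hbad M hM.
have [Y YM [[hY HY]|[hY HY]]] := HL T nb M hM.
- have [X XY [hX HX]] := Ht T nb hbad Y hY.
  exists X; first exact: subset_trans XY YM.
  split => // B BX hB.
  case: (ltnP #|B| (2 + t)) => h; first by apply: HX => //; lia.
  apply: HY; [exact: subset_trans BX XY | lia].
- have [B BY [hB nbB]] := hbad (2 + t) ltac:(lia) Y hY.
  by have := HY B BY hB; rewrite nbB.
Qed.


Lemma card_sum (T : finType) (J : {set T}) (p : pred T) :
  #|[set j in J | p j]| = \sum_(j in J) (p j : nat).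
Proof.
rewrite -sum1_card (eq_bigl (fun j => (j \in J) && p j)); last by move=> j; rewrite inE.
rewrite big_mkcondr /=; apply: eq_bigr => j _; by case: (p j).
Qed.

Lemma card_fiber (T U : finType) (F : {set T}) (p : pred T) (f : T -> U) (D : {set U}) :
  (forall e, e \in F -> p e -> f e \in D) ->
  #|[set e in F | p e]| = \sum_(u in D) #|[set e in F | p e && (f e == u)]|.
Proof.
move=> hD.
rewrite -sum1_card (eq_bigl (fun e => (e \in F) && p e)); last by move=> e; rewrite inE.
rewrite (partition_big f (fun u => u \in D)); last by move=> e /andP [h1 h2]; exact: hD.
apply: eq_bigr => u _; rewrite -sum1_card; apply: eq_bigl => e; by rewrite !inE andbA.
Qed.

Lemma pigeon (V I : finType) (W : {set V}) (J : {set I}) (G : I -> {set V}) (r : nat) :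
  (0 < #|W|)%N ->
  (forall j, j \in J -> G j \subset W /\ (#|W| <= r.+1 * #|G j|)%N) ->
  exists2 v, v \in W & (#|J| <= r.+1 * #|[set j in J | v \in G j]|)%N.
Proof.
move=> hW hG.
case: (boolP [exists v in W, #|J| <= r.+1 * #|[set j in J | v \in G j]|]).
  by move=> /existsP [v /andP [vW h]]; exists v.
rewrite negb_exists => /forallP hn.
have h1 : forall v, v \in W -> (r.+1 * #|[set j in J | v \in G j]|).+1 <= #|J|.
  by move=> v vW; have := hn v; rewrite vW /= -ltnNge.
have e1 : \sum_(v in W) #|[set j in J | v \in G j]| = \sum_(j in J) #|G j|.
  under eq_bigr => v _ do rewrite card_sum.
  rewrite exchange_big /=; apply: eq_bigr => j jJ.
  rewrite -card_sum; apply: eq_card => v; rewrite inE.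
  case vG: (v \in G j); last by rewrite andbF.
  by rewrite (subsetP (hG j jJ).1 v vG).
have s1 : \sum_(v in W) (r.+1 * #|[set j in J | v \in G j]|).+1 <= \sum_(v in W) #|J|.
  by apply: leq_sum => v vW; exact: h1.
have s2 : \sum_(j in J) #|W| <= \sum_(j in J) r.+1 * #|G j|.
  by apply: leq_sum => j jJ; exact: (hG j jJ).2.
move: s1 s2; rewrite !sum_nat_const -!big_distrr /=.
have -> : \sum_(v in W) (r.+1 * #|[set j in J | v \in G j]|).+1 =
   \sum_(v in W) (r.+1 * #|[set j in J | v \in G j]|) + \sum_(v in W) 1.
  by rewrite -big_split /=; apply: eq_bigr => v _; rewrite addn1.
rewrite -big_distrr /= e1 sum1_card; nia.
Qed.


Section HG.
Variables (N : nat) (V : finType) (part : V -> 'I_N * 'I_N) (E : {set V * V * V}).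
Variable r : nat.

Definition X3 (i j k : 'I_N) (v : V) := [set e in E | in_triad part i j k e && (e.1.2 == v)].
Definition cnt i j k v := #|X3 i j k v|.
Definition Pn (i j k : 'I_N) := (#|Vpart part i j| * #|Vpart part i k| * #|Vpart part j k|)%N.
Definition qn (i j k : 'I_N) := (#|Vpart part i j| * #|Vpart part j k|)%N.
Definition excess i j k g := (\sum_(v in Vpart part i k) (cnt i j k v - cnt i j k g))%N.
Definition goodS i j k : {set V} :=
  [set g | (part g == (i, k)) && (r.+1 * excess i j k g <= Pn i j k)%N].

Lemma cnt_le i j k v : (cnt i j k v <= qn i j k)%N.
Proof.
rewrite /cnt /qn -cardsX.
rewrite -(@card_in_imset _ _ (fun e : V * V * V => (e.1.1, e.2)) (mem (X3 i j k v))).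
  apply: subset_leq_card; apply/subsetP => x /imsetP [e].
  rewrite inE => /andP [_ /andP [/and3P [h1 _ h3] _]] ->.
  by rewrite !inE h1 h3.
move=> [[a b] c] [[a' b'] c']; rewrite !inE /= => /andP [_ /andP [_ /eqP h1]].
by move=> /andP [_ /andP [_ /eqP h2]] [-> ->]; rewrite h1 h2.
Qed.

Lemma goodS_big i j k : (#|Vpart part i k| <= r.+1 * #|goodS i j k|)%N.
Proof.
case: (boolP (Vpart part i k \subset goodS i j k)) => hsub.
  have := subset_leq_card hsub; rewrite mulSn; lia.
have [g0 g0V g0G] := subsetPn hsub.
pose D := Vpart part i k :\: goodS i j k.
have g0D : g0 \in D by rewrite inE g0V g0G.
case: (arg_maxnP (cnt i j k) g0D) => g gD gmax.
pose T := [set v in Vpart part i k | (cnt i j k g < cnt i j k v)%N].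
have TG : T \subset goodS i j k.
  apply/subsetP => v; rewrite inE => /andP [vV hv].
  case: (boolP (v \in goodS i j k)) => // vG.
  have : v \in D by rewrite inE vG vV.
  by move=> /gmax; lia.
have hex : (excess i j k g <= #|T| * qn i j k)%N.
  rewrite /excess -sum_nat_const.
  rewrite [X in (_ <= X)%N](eq_bigl (fun v => (v \in Vpart part i k) && (cnt i j k g < cnt i j k v)%N));
    last by move=> v; rewrite inE.
  rewrite big_mkcondr /=; apply: leq_sum => v _.
  case: ifP => h; first by have := cnt_le i j k v; lia.
  by move: h => /negbT; rewrite -leqNgt; lia.
have gD' : g \in D := gD.
move: gD'; rewrite /D in_setD => /andP [gG gV].
move: gV; rewrite inE => gV.
move: gG; rewrite inE gV /= -ltnNge => hlt.
have hP : Pn i j k = (qn i j k * #|Vpart part i k|)%N by rewrite /Pn /qn mulnAC.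
have hT := subset_leq_card TG.
have : (qn i j k * #|Vpart part i k| < qn i j k * (r.+1 * #|goodS i j k|))%N.
  rewrite -hP; apply: (leq_trans hlt).
  apply: (leq_trans (leq_mul (leqnn r.+1) hex)).
  by rewrite [X in (_ <= X)%N]mulnC -mulnA leq_mul2l leq_mul2r hT !orbT.
by rewrite ltn_mul2l => /andP [_ /ltnW].
Qed.

Definition notbad (B : {set 'I_N}) : bool :=
  [exists i, exists k, [&& i \in B, k \in B, (i < k)%N,
     [forall b in B, (i <= b <= k)%N] &
     [exists v, (part v == (i, k)) &&
        [forall j in B, ((i < j < k)%N) ==> (v \in goodS i j k)]]]].

Hypothesis hH : partitioned_hg part E.

Lemma notbad_exists u : (2 <= u)%N -> forall X : {set 'I_N}, ((r.+1 * u).+2 <= #|X|)%N ->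
  exists2 B : {set 'I_N}, B \subset X & #|B| = u /\ notbad B.
Proof.
move=> hu X hX.
have : (0 < #|X|)%N by lia.
rewrite card_gt0 => /set0Pn [x0 x0X].
case: (arg_minnP (fun y : 'I_N => (y : nat)) x0X) => i iX imin.
case: (arg_maxnP (fun y : 'I_N => (y : nat)) x0X) => k kX kmax.
have {}iX : i \in X := iX. have {}kX : k \in X := kX.
pose J := X :\ i :\ k.
have hJ : (r.+1 * u <= #|J|)%N.
  have card2 : forall (Y : {set 'I_N}) (a b : 'I_N), (#|Y| <= #|Y :\ a :\ b| + 2)%N.
    move=> Y a b; rewrite (cardsD1 a Y) (cardsD1 b (Y :\ a)).
    case: (a \in Y); case: (b \in Y :\ a) => /=; rewrite ?add0n ?add1n addn2 /= ?leqnSn //; exact: leqW.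
  rewrite -(leq_add2r 2); apply: leq_trans (card2 X i k); by rewrite addn2.
have Jprop : forall j, j \in J -> (i < j < k)%N.
  move=> j; rewrite !inE => /and3P [jk ji jX].
  have h1 := imin j jX; have h2 := kmax j jX.
  have h3 : (j : nat) <> i by move=> h; move: ji; rewrite (ord_inj h) eqxx.
  have h4 : (j : nat) <> k by move=> h; move: jk; rewrite (ord_inj h) eqxx.
  lia.
have : (0 < #|J|)%N by rewrite mulSn in hJ; lia.
rewrite card_gt0 => /set0Pn [j0 j0J].
have ik : (i < k)%N by have := Jprop j0 j0J; lia.
have [w hw] : exists w, part w = (i, k) by case: hH => _ h _; exact: h.
have wW : w \in Vpart part i k by rewrite inE hw.
have [v vW hv] := @pigeon V _ (Vpart part i k) J (fun j => goodS i j k) r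
  ltac:(by rewrite card_gt0; apply/set0Pn; exists w)
  ltac:(by move=> j _; split; [apply/subsetP => g; rewrite !inE => /andP [] | exact: goodS_big]).
pose Jv := [set j in J | v \in goodS i j k].
have hJv : (u <= #|Jv|)%N.
  by rewrite -(leq_pmul2l (ltn0Sn r)); exact: leq_trans hJ hv.
have [Jv' Jv'sub hJv'] := take_set (n := (u - 2)%N) (X := Jv) ltac:(lia).
have Jv'J : forall j, j \in Jv' -> j \in J.
  by move=> j /(subsetP Jv'sub); rewrite inE => /andP [].
exists (i |: (k |: Jv')).
  apply/subsetP => b; rewrite !inE => /or3P [/eqP -> // | /eqP -> // | /Jv'J].
  by rewrite !inE => /and3P [].
split.
  have kn : k \notin Jv' by apply/negP => /Jv'J /Jprop; lia.
  have in_ : i \notin k |: Jv'.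
    rewrite in_setU1 negb_or; apply/andP; split.
      by apply/negP => /eqP h; move: ik; rewrite h ltnn.
    by apply/negP => /Jv'J /Jprop; lia.
  rewrite cardsU1 in_ cardsU1 kn hJv'; lia.
apply/existsP; exists i; apply/existsP; exists k.
rewrite !inE eqxx /= eqxx orbT ik /=.
apply/andP; split.
  apply/forallP => b; apply/implyP; rewrite !inE => /or3P [/eqP -> | /eqP -> | /Jv'J /Jprop]; try lia.
apply/existsP; exists v; apply/andP; split; first by move: vW; rewrite inE.
apply/forallP => j; apply/implyP; rewrite !inE => /or3P [/eqP -> | /eqP -> | jJv']; try (apply/implyP; lia).
apply/implyP => _; have := subsetP Jv'sub j jJv'; rewrite !inE => /andP [_ h]; exact: h.
Qed.

End HG.


Section Fin.
Variables (N : nat) (V : finType) (part : V -> 'I_N * 'I_N) (E : {set V * V * V}).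
Variables (r : nat) (A : {set 'I_N}).

Definition gam (i k : 'I_N) : option V :=
  [pick g | (part g == (i, k)) &&
     [forall j, ((j \in A) && (i < j < k)%N) ==> (g \in goodS part E r i j k)]].
Definition cc i j k := if gam i k is Some g then cnt part E i j k g else 0%N.
Definition capS (S : {set V * V * V}) c := [set x in take c (enum S)].
Definition E0 : {set V * V * V} :=
  [set e in E | [exists i, [exists j, [exists k,
     [&& i \in A, j \in A, k \in A, (i < j)%N, (j < k)%N, in_triad part i j k e &
         e \in capS (X3 part E i j k e.1.2) (cc i j k)]]]]].

Lemma capS_sub S c : capS S c \subset S.
Proof. by apply/subsetP=> x; rewrite inE => /mem_take; rewrite mem_enum. Qed.

Lemma capS_card S c : #|capS S c| = minn c #|S|.
Proof.
rewrite cardsE (card_uniqP _); last by apply: take_uniq; exact: enum_uniq.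
by rewrite size_take -cardE /minn; case: ltnP.
Qed.

Lemma triad_eq i j k i' j' k' e : in_triad part i j k e -> in_triad part i' j' k' e ->
  [/\ i = i', j = j' & k = k'].
Proof.
move=> /and3P [/eqP h1 /eqP h2 /eqP h3] /and3P [/eqP h1' /eqP h2' /eqP h3'].
move: h1'; rewrite h1 => -[-> ->]; move: h2'; rewrite h2 => -[_ ->]; done.
Qed.

Lemma E0_sub : E0 \subset E.
Proof. by apply/subsetP => e; rewrite inE => /andP []. Qed.

Lemma E0_fiber i j k v : i \in A -> j \in A -> k \in A -> (i < j)%N -> (j < k)%N ->
  [set e in E0 | in_triad part i j k e && (e.1.2 == v)] = capS (X3 part E i j k v) (cc i j k).
Proof.
move=> iA jA kA ij jk; apply/setP => e; rewrite inE.
apply/idP/idP.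
  rewrite inE => /andP [/andP [eE /existsP [i' /existsP [j' /existsP [k' /and5P [_ _ _ _ /and3P [_ ht hc]]]]]]].
  move=> /andP [ht' /eqP ev].
  have [<- <- <-] := triad_eq ht ht'.
  by rewrite -ev.
move=> ec; have := subsetP (capS_sub _ _) e ec; rewrite inE => /andP [eE /andP [ht /eqP ev]].
rewrite ht /= ev eqxx andbT inE eE /=.
apply/existsP; exists i; apply/existsP; exists j; apply/existsP; exists k.
by rewrite iA jA kA ij jk ht ev ec.
Qed.

Lemma count_triad (F : {set V * V * V}) i j k :
  #|[set e in F | in_triad part i j k e]| =
  (\sum_(v in Vpart part i k) #|[set e in F | in_triad part i j k e && (e.1.2 == v)]|)%N.
Proof.
apply: card_fiber => e _ /and3P [_ h _]; by rewrite inE.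
Qed.

Variable R : realType.
Local Open Scope ring_scope.

Lemma dens_E0 i j k : i \in A -> j \in A -> k \in A -> (i < j)%N -> (j < k)%N ->
  triad_density R part E0 i j k =
  (\sum_(v in Vpart part i k) minn (cc i j k) (cnt part E i j k v))%N%:R / (Pn part i j k)%:R.
Proof.
move=> iA jA kA ij jk; rewrite /triad_density count_triad; congr (_%:R / _).
by apply: eq_bigr => v _; rewrite E0_fiber // capS_card.
Qed.

Lemma dens_E i j k : triad_density R part E i j k =
  (\sum_(v in Vpart part i k) cnt part E i j k v)%N%:R / (Pn part i j k)%:R.
Proof. by rewrite /triad_density count_triad. Qed.

Lemma deg_E0 i j k v : i \in A -> j \in A -> k \in A -> (i < j)%N -> (j < k)%N ->
  triad_degree R part E0 i j k v = (minn (cc i j k) (cnt part E i j k v))%:R / (qn part i j k)%:R.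
Proof.
by move=> iA jA kA ij jk; rewrite /triad_degree E0_fiber // capS_card.
Qed.

Lemma dens_step (eps : R) i j k g : (1 <= eps * r.+1%:R) -> 0 < eps ->
  i \in A -> j \in A -> k \in A -> (i < j)%N -> (j < k)%N ->
  gam i k = Some g -> g \in goodS part E r i j k ->
  triad_density R part E i j k - eps <= triad_density R part E0 i j k.
Proof.
move=> hr he iA jA kA ij jk hg gG.
rewrite dens_E0 // dens_E /cc hg.
move: gG; rewrite inE => /andP [_ hex].
set c := cnt part E i j k g.
have -> : (\sum_(v in Vpart part i k) cnt part E i j k v =
          \sum_(v in Vpart part i k) minn c (cnt part E i j k v) + excess part E i j k g)%N.
  rewrite /excess -big_split /=; apply: eq_bigr => v _; rewrite -/c /minn; case: ltnP; lia.
set S := (\sum_(v in _) _)%N.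
set X := excess part E i j k g.
set P := Pn part i j k.
rewrite natrD mulrDl.
suff h : X%:R / P%:R <= eps by lra.
have hX : (X%:R * r.+1%:R <= P%:R :> R).
  by rewrite -natrM ler_nat mulnC.
case: (posnP P) => hP.
  by rewrite hP invr0 mulr0 ltW.
have Pp : (0 : R) < P%:R by rewrite ltr0n.
rewrite ler_pdivrMr //.
have X0 : (0 : R) <= X%:R by exact: ler0n.
nra.
Qed.

End Fin.


Local Open Scope ring_scope.

Lemma bigmin_le_seq (R : realType) (I : eqType) (s : seq I) (P : pred I) (F : I -> R) x0 i0 :
  i0 \in s -> P i0 -> \big[Order.min/x0]_(i <- s | P i) F i <= F i0.
Proof.
elim: s => [//|a s IH]; rewrite in_cons big_cons => /orP [/eqP <-|hs] hP.
  by rewrite hP ge_min lexx.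
case: (P a); last exact: IH.
by rewrite ge_min (IH hs hP) orbT.
Qed.

Lemma bigmin_ge (R : realType) (I : Type) (s : seq I) (P : pred I) (F : I -> R) x0 y :
  y <= x0 -> (forall i, P i -> y <= F i) -> y <= \big[Order.min/x0]_(i <- s | P i) F i.
Proof.
move=> h0 hF; apply: (big_ind (fun z => y <= z)) => //.
by move=> a b ha hb; rewrite le_min ha hb.
Qed.

Lemma bigmin_le1 (R : realType) (I : Type) (s : seq I) (P : pred I) (F : I -> R) (x0 : R) :
  \big[Order.min/x0]_(i <- s | P i) F i <= x0 \/ True.
Proof. by right. Qed.

Lemma hg_le1 (R : realType) N (V : finType) (part : V -> 'I_N * 'I_N) I E :
  hg_density R part I E <= 1.
Proof.
rewrite /hg_density; apply: (big_rec (fun z => z <= 1)) => //.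
by move=> a b _ hb; rewrite ge_min hb orbT.
Qed.

Lemma hg_le_triad (R : realType) N (V : finType) (part : V -> 'I_N * 'I_N) E (i j k : 'I_N) :
  (i < j)%N -> (j < k)%N ->
  hg_density R part [set: 'I_N] E <= triad_density R part E i j k.
Proof.
move=> ij jk; rewrite /hg_density.
eapply le_trans; first (eapply bigmin_le_seq; [exact: mem_index_enum i| by rewrite inE]).
eapply le_trans; first (eapply bigmin_le_seq; [exact: mem_index_enum j| by rewrite inE ij]).
eapply le_trans; first (eapply bigmin_le_seq; [exact: mem_index_enum k| by rewrite inE jk]).
done.
Qed.

Lemma gam_some N (V : finType) (part : V -> 'I_N * 'I_N) E r (A : {set 'I_N})
  (HA : forall B : {set 'I_N}, B \subset A -> (2 <= #|B|)%N -> notbad part E r B) i k :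
  i \in A -> k \in A -> (i < k)%N ->
  exists g, gam part E r A i k = Some g /\ part g = (i, k) /\
    (forall j, j \in A -> (i < j)%N -> (j < k)%N -> g \in goodS part E r i j k).
Proof.
move=> iA kA ik.
pose B := [set b in A | (i <= b <= k)%N].
have iB : i \in B by rewrite inE iA leqnn ltnW.
have kB : k \in B by rewrite inE kA leqnn ltnW.
have hB : (2 <= #|B|)%N.
  have ne : i != k by apply/negP => /eqP h; move: ik; rewrite h ltnn.
  have <- : #|[set i; k]| = 2%N by rewrite cards2 ne.
  apply: subset_leq_card; apply/subsetP => b; rewrite !inE => /orP [/eqP ->|/eqP ->]; by rewrite ?iA ?kA leqnn (ltnW ik).
have BA : B \subset A by apply/subsetP => b; rewrite inE => /andP [].
have := HA B BA hB.
move=> /existsP [i' /existsP [k' /and5P [i'B k'B i'k' /forallP hb /existsP [v /andP [/eqP pv /forallP hv]]]]].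
have ei : i' = i.
  apply: ord_inj; have := hb i; rewrite iB /= => /andP [h1 _].
  move: i'B; rewrite inE => /andP [_ /andP [h2 _]]; lia.
have ek : k' = k.
  apply: ord_inj; have := hb k; rewrite kB /= => /andP [_ h1].
  move: k'B; rewrite inE => /andP [_ /andP [_ h2]]; lia.
subst i' k'.
rewrite /gam; case: pickP => [g /andP [/eqP pg /forallP hg]|H].
  exists g; split => //; split => // j jA ij jk.
  by have := hg j; rewrite jA ij jk.
exfalso; have := H v; rewrite pv eqxx /=.
suff -> : [forall j, ((j \in A) && (i < j < k)%N) ==> (v \in goodS part E r i j k)] by [].
apply/forallP => j; apply/implyP => /andP [jA /andP [ij jk]].
have := hv j; rewrite inE jA (ltnW ij) (ltnW jk) ij jk /=.
by move=> h; exact: h.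
Qed.

Unset Implicit Arguments.
Local Open Scope ring_scope.

Theorem lemma5p1 (R : realType) (eps : R) (heps : 0 < eps) (n : nat) :
  exists N : nat,
    forall (V : finType) (part : V -> 'I_N * 'I_N) (E : {set V * V * V}),
      partitioned_hg part E ->
      exists (I : {set 'I_N}) (E0 : {set V * V * V}),
        [/\ #|I| = n,
            E0 \subset E,
            (forall e, e \in E0 -> exists i j k : 'I_N,
                [/\ [&& i \in I, j \in I & k \in I],
                    (i < j)%N, (j < k)%N & in_triad part i j k e]),
            hg_density R part I E0 >= hg_density R part [set: 'I_N] E - eps &
            (forall i k : 'I_N, i \in I -> k \in I -> (i < k)%N ->
               exists gamma : V,
                 part gamma = (i, k) /\
                 (forall j : 'I_N, j \in I -> (i < j)%N -> (j < k)%N ->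
                    forall v : V, part v = (i, k) ->
                      triad_degree R part E0 i j k v
                        <= triad_degree R part E0 i j k gamma))].
Proof.
have [r hr] : exists r : nat, 1 <= eps * r.+1%:R.
  exists (Num.Def.archi_bound (eps^-1)).
  have he' : 0 <= eps^-1 by rewrite invr_ge0 ltW.
  have h := archi_boundP he'.
  set b := Num.Def.archi_bound _ in h *.
  have h2 : eps^-1 < b.+1%:R by apply: lt_le_trans h _; rewrite ler_nat.
  by move: h2; rewrite -(ltr_pM2l heps) mulfV ?lt0r_neq0 // => /ltW.
have [L HL] := iter_ramsey n (fun u => (r.+1 * u).+2)%N n.
exists L => V part E hH.
have [X _ [hX HX]] := HL 'I_L (notbad part E r)
  (fun u hu X hX => notbad_exists hH hu hX) [set: 'I_L]
  ltac:(by rewrite cardsT card_ord).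
have [A AX hA] := take_set hX.
have HA : forall B : {set 'I_L}, B \subset A -> (2 <= #|B|)%N -> notbad part E r B.
  move=> B BA hB; apply: HX; first exact: subset_trans BA AX.
  rewrite hB /=; move: (subset_leq_card BA) => h; rewrite -hA addnC addn2 ltnS (leq_trans h (leqnSn _)) //.
exists A, (E0 part E r A); split.
- exact: hA.
- exact: E0_sub.
- move=> e; rewrite inE => /andP [_ /existsP [i /existsP [j /existsP [k]]]].
  move=> /and5P [iA jA kA ij /andP [jk /andP [ht _]]].
  by exists i, j, k; rewrite iA jA kA.
- have hle := hg_le1 R part [set: 'I_L] E.
  move: hle; rewrite /hg_density => hle.
  apply: bigmin_ge; first by lra.
  move=> i iA; apply: bigmin_ge; first by lra.
  move=> j /andP [jA ij]; apply: bigmin_ge; first by lra.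
  move=> k /andP [kA jk].
  have [g [hg [pg gG]]] := gam_some HA iA kA (ltn_trans ij jk).
  apply: le_trans (dens_step hr heps iA jA kA ij jk hg (gG j jA ij jk)).
  by rewrite lerD2r; exact: hg_le_triad.
- move=> i k iA kA ik.
  have [g [hg [pg gG]]] := gam_some HA iA kA ik.
  exists g; split => // j jA ij jk v pv.
  rewrite !deg_E0 // /cc hg.
  apply: ler_wpM2r; first by rewrite invr_ge0 ler0n.
  by rewrite ler_nat minnn geq_minl.
Qed.
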